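(* Let $\{E_\alpha\}_{\alpha\in\mathbb I}$ be a long directed family of Banach spaces over $\mathbb K\in\{\mathbb R,\mathbb C\}$ whose bonding maps (inclusions $E_\alpha\to E_\beta$, $\alpha\leq\beta$) are linear isometries. Then: (a) $\{E_\alpha\}_{\alpha\in\mathbb I}$ satisfies ACP; (b) $E=\bigcup_\alpha E_\alpha$ with the colimit space topology $\mathscr T$ is a Banach space; and (c) $(E,\mathscr T)$ is the colimit of $\{E_\alpha\}_{\alpha\in\mathbb I}$ in the category $\mathsf{TVS}_{\mathbb K}$ of topological vector spaces over $\mathbb K$ and continuous linear maps, and in its full subcategory $\mathsf{LCTVS}_{\mathbb K}$ of locally convex spaces.
   Context: Long means every countable subset of $\mathbb I$ has an upper bound. The colimit space topology is $\mathscr T=\{U\subseteq E\mid U\cap E_\alpha\text{ open in }E_\alpha\ \forall\alpha\}$. ACP (for the underlying additive topological groups) means $\mathscr T$ coincides with the finest group topology on $E$ making all inclusions continuous. *)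

(* Defs.v *)
From HB Require Import structures.
From mathcomp Require Import all_boot all_order all_algebra.
From mathcomp Require Import all_classical all_reals all_analysis.
From mathcomp Require Export complex.
Set Implicit Arguments. Unset Strict Implicit. Unset Printing Implicit Defensive.
Import Order.TTheory GRing.Theory Num.Theory.
Local Open Scope classical_set_scope.
Local Open Scope ring_scope.

Definition directed_preorder (I : Type) (le : I -> I -> Prop) : Prop :=
  (forall a, le a a) /\ (forall a b c, le a b -> le b c -> le a c) /\
  (forall a b, exists c, le a c /\ le b c).

Definition long_index (I : Type) (le : I -> I -> Prop) : Prop :=
  forall A : set I, countable A -> exists b, forall a, A a -> le a b.

Section Topologies.
Variable K : numFieldType.
Variable V : lmodType K.

Definition is_topology (tau : set (set V)) : Prop :=
  tau set0 /\ tau setT /\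
  (forall U W, tau U -> tau W -> tau (U `&` W)) /\
  (forall F : set (set V), F `<=` tau -> tau (\bigcup_(U in F) U)).

Definition add_continuous (tau : set (set V)) : Prop :=
  forall U x y, tau U -> U (x + y) ->
    exists P W, [/\ tau P, tau W, P x, W y &
                 forall a b, P a -> W b -> U (a + b)].

Definition opp_continuous (tau : set (set V)) : Prop :=
  forall U, tau U -> tau [set x | U (- x)].

Definition scale_continuous (tau : set (set V)) : Prop :=
  forall U (k : K) x, tau U -> U (k *: x) ->
    exists e : K, 0 < e /\ exists P, [/\ tau P, P x &
      forall (k' : K) y, `|k' - k| < e -> P y -> U (k' *: y)].

(* Hausdorffness is not required (the usual convention, also that of
   mathcomp-analysis' topologicalLmodType) *)
Definition group_topology (tau : set (set V)) : Prop :=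
  is_topology tau /\ add_continuous tau /\ opp_continuous tau.

Definition tvs_topology (tau : set (set V)) : Prop :=
  is_topology tau /\ add_continuous tau /\ scale_continuous tau.

Definition convex_subset (C : set V) : Prop :=
  forall x y (t : K), C x -> C y -> 0 <= t <= 1 -> C (t *: x + (1 - t) *: y).

Definition locally_convex_topology (tau : set (set V)) : Prop :=
  forall U x, tau U -> U x ->
    exists C, [/\ tau C, C x, C `<=` U & convex_subset C].

Definition is_norm (nrm : V -> K) : Prop :=
  [/\ forall x, 0 <= nrm x,
      forall x, nrm x = 0 -> x = 0,
      forall (k : K) x, nrm (k *: x) = `|k| * nrm x &
      forall x y, nrm (x + y) <= nrm x + nrm y].

Definition norm_complete (nrm : V -> K) : Prop :=
  forall u : nat -> V,
    (forall e : K, 0 < e -> exists N, forall m n, (N <= m)%N -> (N <= n)%N ->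
        nrm (u m - u n) < e) ->
    exists l, forall e : K, 0 < e -> exists N, forall n, (N <= n)%N ->
        nrm (u n - l) < e.

Definition norm_topology (nrm : V -> K) : set (set V) :=
  [set U | forall x, U x -> exists2 e : K, 0 < e &
     forall y, nrm (y - x) < e -> U y].

Definition banach_topology (tau : set (set V)) : Prop :=
  exists nrm : V -> K, [/\ is_norm nrm, norm_complete nrm &
                          norm_topology nrm = tau].

Definition is_linear_map (F : lmodType K) (g : V -> F) : Prop :=
  forall (k : K) x y, g (k *: x + y) = k *: g x + g y.

End Topologies.

(* Each E_a is a Banach space; iota a : E_a -> V is the (injective, linear)
   inclusion onto the subset E_a of the union V. *)
Section Family.
Variable K : numFieldType.
Variable I : Type.
Variable le : I -> I -> Prop.
Variable E : I -> completeNormedModType K.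
Variable V : lmodType K.
Variable iota : forall a, {linear E a -> V}.

(* E_a is contained in E_b for a <= b, and the inclusion (bonding map) is an
   isometry; linearity of the bonding maps is automatic since iota is linear
   and injective. *)
Definition isometric_bonding : Prop :=
  (forall a, injective (iota a)) /\
  (forall a b, le a b -> forall x : E a, exists y : E b, iota b y = iota a x) /\
  (forall a b, le a b -> forall (x : E a) (y : E b),
      iota a x = iota b y -> `|x| = `|y|).

Definition union_covers : Prop := forall v : V, exists a (x : E a), iota a x = v.

Definition colim_topology : set (set V) :=
  [set U | forall a, open (iota a @^-1` U)].

Definition inclusions_continuous (tau : set (set V)) : Prop :=
  forall a U, tau U -> open (iota a @^-1` U).

Definition ACP : Prop :=
  [/\ group_topology colim_topology,
      inclusions_continuous colim_topology &
      forall sigma : set (set V), group_topology sigma ->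
        inclusions_continuous sigma -> sigma `<=` colim_topology].

Definition compatible_family (F : Type) (f : forall a, E a -> F) : Prop :=
  forall a b (x : E a) (y : E b), le a b -> iota a x = iota b y -> f a x = f b y.

Definition continuous_from (tau : set (set V)) (F : topologicalType)
    (g : V -> F) : Prop :=
  forall W : set F, open W -> tau (g @^-1` W).

Definition colimit_in_TVS : Prop :=
  tvs_topology colim_topology /\ inclusions_continuous colim_topology /\
  forall (F : topologicalLmodType K) (f : forall a, {linear E a -> F}),
    (forall a, continuous (f a)) -> compatible_family (fun a => f a) ->
    (exists g : V -> F, [/\ is_linear_map g, continuous_from colim_topology g &
                          forall a x, g (iota a x) = f a x]) /\
    (forall g1 g2 : V -> F,
        is_linear_map g1 -> continuous_from colim_topology g1 ->
        (forall a x, g1 (iota a x) = f a x) ->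
        is_linear_map g2 -> continuous_from colim_topology g2 ->
        (forall a x, g2 (iota a x) = f a x) -> g1 = g2).

(* (V, colim_topology) with the inclusions is the colimit in LCTVS_K
   (tvsType K = locally convex topological vector spaces over K) *)
Definition colimit_in_LCTVS : Prop :=
  tvs_topology colim_topology /\ locally_convex_topology colim_topology /\
  inclusions_continuous colim_topology /\
  forall (F : tvsType K) (f : forall a, {linear E a -> F}),
    (forall a, continuous (f a)) -> compatible_family (fun a => f a) ->
    (exists g : V -> F, [/\ is_linear_map g, continuous_from colim_topology g &
                          forall a x, g (iota a x) = f a x]) /\
    (forall g1 g2 : V -> F,
        is_linear_map g1 -> continuous_from colim_topology g1 ->
        (forall a x, g1 (iota a x) = f a x) ->
        is_linear_map g2 -> continuous_from colim_topology g2 ->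
        (forall a x, g2 (iota a x) = f a x) -> g1 = g2).

End Family.

Definition corollary2p12_for (K : numFieldType) : Prop :=
  forall (I : Type) (le : I -> I -> Prop)
         (E : I -> completeNormedModType K) (V : lmodType K)
         (iota : forall a, {linear E a -> V}),
    directed_preorder le -> long_index le ->
    isometric_bonding le iota -> union_covers iota ->
    [/\ ACP iota,
        banach_topology (colim_topology iota) &
        colimit_in_TVS le iota /\ colimit_in_LCTVS le iota].

(* Main.v *)
Require Import Defs.
From HB Require Import structures.
From mathcomp Require Import all_boot all_order all_algebra.
From mathcomp Require Import all_classical all_reals all_analysis.
From mathcomp Require Import complex.
From mathcomp Require Import ring.
Set Implicit Arguments. Unset Strict Implicit. Unset Printing Implicit Defensive.
Import Order.TTheory GRing.Theory Num.Theory.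
Local Open Scope classical_set_scope.
Local Open Scope ring_scope.

Lemma nrm0_ (K : numFieldType) (V : lmodType K) (nrm : V -> K) :
  is_norm nrm -> nrm 0 = 0.
Proof. by case=> _ _ hZ _; rewrite -(scale0r (0:V)) hZ normr0 mul0r. Qed.

Lemma nrmN_ (K : numFieldType) (V : lmodType K) (nrm : V -> K) :
  is_norm nrm -> forall x, nrm (- x) = nrm x.
Proof. by case=> _ _ hZ _ x; rewrite -scaleN1r hZ normrN1 mul1r. Qed.

Lemma nrmB_ (K : numFieldType) (V : lmodType K) (nrm : V -> K) :
  is_norm nrm -> forall x y, nrm (x - y) = nrm (y - x).
Proof. by move=> hn x y; rewrite -opprB nrmN_. Qed.

Lemma nb_open (K : numFieldType) (V : lmodType K) (nrm : V -> K) :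
  is_norm nrm -> forall x r, norm_topology nrm [set y | nrm (y - x) < r].
Proof.
move=> hn x r y /= hy; exists (r - nrm (y - x)); first by rewrite subr_gt0.
move=> z hz /=; have [_ _ _ hD] := hn.
rewrite -(subrK y z) -addrA (le_lt_trans (hD _ _)) //.
by rewrite -ltrBrDr.
Qed.

Lemma nb_center (K : numFieldType) (V : lmodType K) (nrm : V -> K) :
  is_norm nrm -> forall x r, 0 < r -> nrm (x - x) < r.
Proof. by move=> hn x r hr; rewrite subrr nrm0_. Qed.

Lemma normtop_topology (K : numFieldType) (V : lmodType K) (nrm : V -> K) :
  is_norm nrm -> is_topology (norm_topology nrm).
Proof.
move=> hn; split; first by move=> x.
split; first by move=> x _; exists 1 => //.
split.
  move=> U W hU hW x [Ux Wx].
  have [e1 e10 h1] := hU x Ux; have [e2 e20 h2] := hW x Wx.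
  have [le12|le21] := real_leP (gtr0_real e10) (gtr0_real e20).
    exists e1 => // y hy; split; first exact: h1.
    by apply: h2; apply: lt_le_trans le12.
  exists e2 => // y hy; split; last exact: h2.
  by apply: h1; apply: lt_trans le21.
move=> F hF x [U FU Ux].
have [e e0 h] := hF U FU x Ux; exists e => // y hy; exists U => //; exact: h.
Qed.

Lemma normtop_add (K : numFieldType) (V : lmodType K) (nrm : V -> K) :
  is_norm nrm -> Defs.add_continuous (norm_topology nrm).
Proof.
move=> hn U x y hU Uxy; have [e e0 h] := hU _ Uxy.
have e20 : 0 < e / 2 by rewrite divr_gt0 ?ltr0n.
exists [set a | nrm (a - x) < e / 2], [set b | nrm (b - y) < e / 2]; split.
- exact: (nb_open hn).
- exact: (nb_open hn).
- exact: (nb_center hn).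
- exact: (nb_center hn).
move=> a b ha hb; apply: h; have [_ _ _ hD] := hn.
have -> : a + b - (x + y) = (a - x) + (b - y).
  by rewrite opprD addrACA.
by rewrite (le_lt_trans (hD _ _)) // [e]splitr ltrD.
Qed.

Lemma normtop_opp (K : numFieldType) (V : lmodType K) (nrm : V -> K) :
  is_norm nrm -> Defs.opp_continuous (norm_topology nrm).
Proof.
move=> hn U hU x /= Ux; have [e e0 h] := hU _ Ux.
exists e => // y hy /=; apply: h; by rewrite -opprD nrmN_.
Qed.

Lemma normtop_scale (K : numFieldType) (V : lmodType K) (nrm : V -> K) :
  is_norm nrm -> Defs.scale_continuous (norm_topology nrm).
Proof.
move=> hn U k x hU Ukx; have [e0 e00 h] := hU _ Ukx.
have [hge0 _ hZ hD] := hn.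
set M := nrm x + 1.
have M0 : 0 < M by rewrite /M ltr_wpDl.
set e := e0 / (2 * M).
have e0' : 0 < e by rewrite divr_gt0 // mulr_gt0 ?ltr0n.
exists e; split => //.
set L := `|k| + e.
have L0 : 0 < L by rewrite /L ltr_wpDl.
set d := e0 / (2 * L).
have d0 : 0 < d by rewrite divr_gt0 // mulr_gt0 ?ltr0n.
exists [set y | nrm (y - x) < d]; split; [exact: (nb_open hn) | exact: (nb_center hn)|].
move=> k' y hk hy; apply: h.
have -> : k' *: y - k *: x = k' *: (y - x) + (k' - k) *: x.
  by rewrite scalerBr scalerBl addrA subrK.
apply: (le_lt_trans (hD _ _)); rewrite !hZ.
have hk' : `|k'| <= L.
  have -> : k' = k + (k' - k) by rewrite addrC subrK.
  by rewrite (le_trans (ler_normD _ _)) // lerD2l ltW.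
have t1 : `|k'| * nrm (y - x) < e0 / 2.
  apply: (le_lt_trans (ler_wpM2r (hge0 _) hk')).
  have -> : e0 / 2 = L * d by rewrite /d; field; rewrite lt0r_neq0.
  by rewrite ltr_pM2l.
have t2 : `|k' - k| * nrm x < e0 / 2.
  apply: (le_lt_trans (ler_wpM2r (hge0 _) (ltW hk))).
  have -> : e0 / 2 = e * M by rewrite /e; field; rewrite lt0r_neq0.
  by rewrite ltr_pM2l // /M ltrDl.
by rewrite [e0]splitr ltrD.
Qed.

Lemma normtop_lc (K : numFieldType) (V : lmodType K) (nrm : V -> K) :
  is_norm nrm -> locally_convex_topology (norm_topology nrm).
Proof.
move=> hn U x hU Ux; have [e e0 h] := hU _ Ux.
have [hge0 _ hZ hD] := hn.
exists [set y | nrm (y - x) < e]; split; [exact: (nb_open hn) | exact: (nb_center hn)| exact: h |].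
move=> a b t ha hb /andP[t0 t1] /=.
have -> : t *: a + (1 - t) *: b - x = t *: (a - x) + (1 - t) *: (b - x).
  have {1}-> : x = t *: x + (1 - t) *: x by rewrite -scalerDl addrC subrK scale1r.
  by rewrite !scalerBr opprD addrACA.
apply: (le_lt_trans (hD _ _)); rewrite !hZ ger0_norm // ger0_norm ?subr_ge0 //.
have [->|t1'] := eqVneq t 1.
  by rewrite subrr mul0r addr0 mul1r.
have t1s : 0 < 1 - t by rewrite subr_gt0 lt_neqAle t1' t1.
have -> : e = t * e + (1 - t) * e by rewrite -mulrDl addrC subrK mul1r.
by rewrite ler_ltD // ?ler_wpM2l // ?ltW // ltr_pM2l.
Qed.

Lemma main_gen (K : numFieldType)
  (archK : forall e : K, 0 < e -> exists n : nat, n.+1%:R^-1 < e) :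
  corollary2p12_for K.
Proof.
move=> I le E V iota [lerefl [letr ledir]] hlong [inj [hup hiso]] hcov.
have cov' : forall v, exists p : {a : I & E a}, iota (tag p) (tagged p) = v.
  by move=> v; have [a [x hx]] := hcov v; exists (Tagged E x).
pose rep v := proj1_sig (cid (cov' v)).
have repP : forall v, iota (tag (rep v)) (tagged (rep v)) = v.
  by move=> v; rewrite /rep; case: cid.
pose nrm v := `|tagged (rep v)|.
have nrm_iota : forall a (x : E a), nrm (iota a x) = `|x|.
  move=> a x; rewrite /nrm; set p := rep _.
  have hp : iota (tag p) (tagged p) = iota a x by exact: repP.
  have [c [hac hpc]] := ledir a (tag p).
  have [z hz] := hup _ _ hac x.
  rewrite (hiso _ _ hac x z (esym hz)).
  by rewrite (hiso _ _ hpc (tagged p) z (etrans hp (esym hz))).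
have common2 : forall v w : V, exists c (x y : E c), iota c x = v /\ iota c y = w.
  move=> v w; have [a [x hx]] := hcov v; have [b [y hy]] := hcov w.
  have [c [hac hbc]] := ledir a b.
  have [x' hx'] := hup _ _ hac x; have [y' hy'] := hup _ _ hbc y.
  by exists c, x', y'; rewrite hx' hy'.
have seqc : forall u : nat -> V, exists b, forall n, exists x : E b, iota b x = u n.
  move=> u; pose A := range (fun n => tag (rep (u n))).
  have cA : countable A by apply: sub_countable (card_image_le _ _) (countableP _).
  have [b hb] := hlong A cA; exists b => n.
  have [y hy] := hup _ _ (hb _ (ex_intro2 _ _ n Logic.I erefl)) (tagged (rep (u n))).
  by exists y; rewrite hy repP.
have hnorm : is_norm nrm.
  split.
  - by move=> v; rewrite /nrm.
  - move=> v; have [a [x <-]] := hcov v; rewrite nrm_iota => /normr0_eq0 ->.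
    exact: linear0.
  - move=> k v; have [a [x <-]] := hcov v; by rewrite -linearZ !nrm_iota normrZ.
  - move=> v w; have [c [x [y [<- <-]]]] := common2 v w.
    by rewrite -linearD !nrm_iota ler_normD.
have htop : norm_topology nrm = colim_topology iota.
  apply/seteqP; split => U /= hU.
    move=> a; rewrite openE => x Ux; rewrite /interior; apply/nbhs_ballP.
    have [e e0 h] := hU _ Ux; exists e => // y /=.
    rewrite -ball_normE /= => hy; apply: h.
    by rewrite -linearB nrm_iota distrC.
  move=> v Uv; apply: contrapT => Hno.
  have H : forall n : nat, exists y, nrm (y - v) < n.+1%:R^-1 /\ ~ U y.
    move=> n; apply: contrapT => Hn; apply: Hno.
    exists n.+1%:R^-1; first by rewrite invr_gt0 ltr0Sn.
    move=> y Hy; apply: contrapT => nUy; apply: Hn; by exists y.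
  have [y hy] := choice H.
  pose w n := if n is m.+1 then y m else v.
  have [b hb] := seqc w.
  have [xv hxv] := hb 0%N.
  have := hU b; rewrite openE => /(_ xv); rewrite /= hxv => /(_ Uv).
  rewrite /interior => /nbhs_ballP [e e0 he].
  have [n hn] := archK e e0.
  have [xn hxn] := hb n.+1.
  have [hyn nUy] := hy n.
  apply: nUy; rewrite /= in hxn; rewrite -hxn; apply: (he xn).
  rewrite -ball_normE /=.
  rewrite -nrm_iota linearB hxn hxv /= -nrmB_ //.
  exact: lt_trans hyn hn.
have hcomp : norm_complete nrm.
  move=> u hu; have [b hb] := seqc u; have [x hx] := choice hb.
  have cx : cauchy (x @ \oo).
    apply: cauchy_exP => e e0; have [N hN] := hu e e0; exists (x N).
    exists N => // n /= hn.
    rewrite -ball_normE /= -nrm_iota linearB !hx; exact: hN.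
  have [l hl] := iffLR (cvg_ex _) (cauchy_cvg _ cx).
  exists (iota b l) => e e0; move/cvgrPdist_lt: hl => /(_ e e0) [N _ hN].
  exists N => n hn.
  rewrite -(hx n) -linearB nrm_iota distrC; exact: hN.
have univ : forall (F : topologicalLmodType K) (f : forall a, {linear E a -> F}),
    (forall a, continuous (f a)) -> compatible_family le iota (fun a => f a) ->
    (exists g : V -> F, [/\ is_linear_map g, continuous_from (colim_topology iota) g &
                          forall a x, g (iota a x) = f a x]) /\
    (forall g1 g2 : V -> F,
        is_linear_map g1 -> continuous_from (colim_topology iota) g1 ->
        (forall a x, g1 (iota a x) = f a x) ->
        is_linear_map g2 -> continuous_from (colim_topology iota) g2 ->
        (forall a x, g2 (iota a x) = f a x) -> g1 = g2).
  move=> F f hf hc.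
  pose g v := f (tag (rep v)) (tagged (rep v)).
  have gi : forall a x, g (iota a x) = f a x.
    move=> a x; rewrite /g; set p := rep _.
    have hp : iota (tag p) (tagged p) = iota a x := repP _.
    have [c [hac hpc]] := ledir a (tag p); have [z hz] := hup _ _ hac x.
    by rewrite (hc _ _ x z hac (esym hz)) (hc _ _ (tagged p) z hpc (etrans hp (esym hz))).
  split.
    exists g; split.
    - move=> k v w; have [c [x [y [<- <-]]]] := common2 v w.
      by rewrite -linearP !gi linearP.
    - move=> W oW a.
      have -> : iota a @^-1` (g @^-1` W) = f a @^-1` W.
        by apply/seteqP; split=> x /=; rewrite gi.
      exact: (iffLR (continuousP _) (hf a)) W oW.
    - exact: gi.
  move=> g1 g2 _ _ h1 _ _ h2; apply: funext => v; have [a [x <-]] := hcov v.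
  by rewrite h1 h2.
have gt : group_topology (colim_topology iota).
  rewrite -htop; split; first exact: normtop_topology.
  by split; [exact: normtop_add | exact: normtop_opp].
have tt : tvs_topology (colim_topology iota).
  rewrite -htop; split; first exact: normtop_topology.
  by split; [exact: normtop_add | exact: normtop_scale].
have ic : inclusions_continuous iota (colim_topology iota) by move=> a U hU; exact: hU a.
split.
- by split => // sigma _ hs U hU a; exact: hs a U hU.
- by exists nrm; split.
split; first by split => //; split => //; exact: univ.
split => //; split; first by rewrite -htop; exact: normtop_lc.
split => // F f hf hc; exact: univ.
Qed.
Lemma archR (R : realType) (e : R) : 0 < e -> exists n : nat, n.+1%:R^-1 < e.
Proof.
move=> e0; have [N _ hN] := near_infty_natSinv_lt (PosNum e0).
by exists N; exact: (hN N (leqnn N)).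
Qed.

Lemma archC (R : realType) (e : R[i]) : 0 < e -> exists n : nat, n.+1%:R^-1 < e.
Proof.
rewrite ltcE => /andP[/eqP hIm hRe].
have [n hn] := archR hRe; exists n.
have -> : (n.+1%:R^-1 : R[i]) = real_complex R (n.+1%:R^-1).
  by rewrite fmorphV rmorph_nat.
by rewrite ltcE /= hIm eqxx hn.
Qed.

Theorem corollary2p12 (R : realType) :
  corollary2p12_for (R : numFieldType) /\ corollary2p12_for (R[i] : numFieldType).
Proof. by split; apply: main_gen; [exact: archR | exact: archC]. Qed.
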